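(* Let $\mathbf{b}\in H_{1,2,2}$ have odd norm. Then there is exactly one unit $\mathbf{u}$ of $H_{1,2,2}$ such that $\mathbf{b}\mathbf{u}$ is primary, and exactly one unit $\mathbf{u}'$ of $H_{1,2,2}$ such that $\mathbf{u}'\mathbf{b}$ is primary.
   Context: Let $\mathbf{i},\mathbf{j},\mathbf{k}$ be the standard quaternion units; $\overline{\mathbf{q}}$ is quaternion conjugation and $N(\mathbf{q})=\mathbf{q}\overline{\mathbf{q}}$. $H_{1,2,2}$ is the subring of the quaternions equal to the $\mathbb{Z}$-module generated by $\mathbf{v}_1=1$, $\mathbf{v}_2=\mathbf{i}$, $\mathbf{v}_3=\tfrac12(1+\mathbf{i}+\sqrt2\,\mathbf{j})$, $\mathbf{v}_4=\tfrac12(1+\mathbf{i}+\sqrt2\,\mathbf{k})$; it has 24 units (elements of norm 1). Let $I = 2(1+\mathbf{i})H_{1,2,2}$ (equal to $H_{1,2,2}\,2(1+\mathbf{i})$). An element $\mathbf{q}\in H_{1,2,2}$ is primary if $\mathbf{q}-1\in I$ or $\mathbf{q}-(1+2\mathbf{v}_3)\in I$. *)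

(* Defs.v *)
From HB Require Import structures.
From mathcomp Require Import all_boot all_order all_algebra.
Set Implicit Arguments. Unset Strict Implicit. Unset Printing Implicit Defensive.
Import Order.TTheory GRing.Theory Num.Theory.
Local Open Scope ring_scope.

Record quat (R : rcfType) := Quat { q0 : R; q1 : R; q2 : R; q3 : R }.

Section Quat.
Variable R : rcfType.
Implicit Types a b q : quat R.

Definition qadd a b := Quat (q0 a + q0 b) (q1 a + q1 b) (q2 a + q2 b) (q3 a + q3 b).
Definition qopp a := Quat (- q0 a) (- q1 a) (- q2 a) (- q3 a).
Definition qsub a b := qadd a (qopp b).
(* Hamilton product: i^2 = j^2 = k^2 = ijk = -1 *)
Definition qmul a b := Quat
  (q0 a * q0 b - q1 a * q1 b - q2 a * q2 b - q3 a * q3 b)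
  (q0 a * q1 b + q1 a * q0 b + q2 a * q3 b - q3 a * q2 b)
  (q0 a * q2 b - q1 a * q3 b + q2 a * q0 b + q3 a * q1 b)
  (q0 a * q3 b + q1 a * q2 b - q2 a * q1 b + q3 a * q0 b).
Definition qconj a := Quat (q0 a) (- q1 a) (- q2 a) (- q3 a).
Definition qN q := qmul q (qconj q).
Definition qreal (r : R) := Quat r 0 0 0.
Definition qzscale (z : int) q := Quat (z%:~R * q0 q) (z%:~R * q1 q) (z%:~R * q2 q) (z%:~R * q3 q).

Definition q1e : quat R := qreal 1.
Definition qi : quat R := Quat 0 1 0 0.
Definition v1 : quat R := q1e.
Definition v2 : quat R := qi.
Definition v3 : quat R := Quat (1/2) (1/2) (Num.sqrt 2 / 2) 0.
Definition v4 : quat R := Quat (1/2) (1/2) 0 (Num.sqrt 2 / 2).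

Definition inH q : Prop := exists a1 a2 a3 a4 : int,
  q = qadd (qadd (qzscale a1 v1) (qzscale a2 v2)) (qadd (qzscale a3 v3) (qzscale a4 v4)).

Definition unitH u : Prop := inH u /\ qN u = q1e.

Definition gen2 : quat R := qmul (qreal 2) (qadd q1e qi).
Definition inI q : Prop := exists h, inH h /\ q = qmul gen2 h.

Definition primary q : Prop :=
  inH q /\ (inI (qsub q q1e) \/ inI (qsub q (qadd q1e (qmul (qreal 2) v3)))).

Definition odd_norm b : Prop := exists n : int, odd `|n|%N /\ qN b = qreal n%:~R.
End Quat.

(* Main.v *)
Require Import Defs.
From mathcomp Require Import all_boot all_order all_algebra.
From mathcomp Require Import ring lra zify.
Set Implicit Arguments. Unset Strict Implicit. Unset Printing Implicit Defensive.
Import Order.TTheory GRing.Theory Num.Theory.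
Local Open Scope ring_scope.

Definition T4 := (int * int * int * int)%type.
Definition imul (a b : T4) : T4 :=
  let: (a1,a2,a3,a4) := a in let: (b1,b2,b3,b4) := b in
 (a1*b1 - a2*b2 - a2*b3 - a3*b3 - a4*b2 - a4*b3 - a4*b4,
  a1*b2 + a2*b1 + a2*b4 + a3*b2 + a3*b4 - a4*b3,
  a1*b3 - a2*b4 + a3*b1 + a3*b3 + a4*b2 + a4*b3,
  a1*b4 + a2*b3 - a3*b2 + a4*b1 + a4*b3 + a4*b4).
Definition tsub (a b : T4) : T4 :=
  let: (a1,a2,a3,a4) := a in let: (b1,b2,b3,b4) := b in (a1-b1,a2-b2,a3-b3,a4-b4).
Definition nf (a : T4) : int := let: (a1,a2,a3,a4) := a in
  a1*a1 + a2*a2 + (a1+a2)*(a3+a4) + a3*a3 + a4*a4 + a3*a4.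
Definition checkL (x : T4) : bool := let: (x1,x2,x3,x4) := x in
  [&& (2 %| x1)%Z, (2 %| x2)%Z, (2 %| x3)%Z, (2 %| x4)%Z, (4 %| x3 - x4)%Z & (4 %| x1 + x2 + x3)%Z].
Definition e1 : T4 := (1,0,0,0).
Definition c2 : T4 := (1,0,2,0).
Definition gg : T4 := (2,2,0,0).
Definition goodR r u := checkL (tsub (imul r u) e1) || checkL (tsub (imul r u) c2).
Definition goodL r u := checkL (tsub (imul u r) e1) || checkL (tsub (imul u r) c2).
Definition D4 : seq int := [:: 0; 1; 2; 3].
Definition D5 : seq int := [:: -2; -1; 0; 1; 2].
Definition D3 : seq int := [:: -1; 0; 1].
Definition box : seq T4 :=
  flatten (map (fun x1 => flatten (map (fun x2 => flatten (map (fun x3 =>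
    map (fun x4 => (x1,x2,x3,x4)) D3) D3)) D5)) D5).
Definition unitsL := [seq a <- box | nf a == 1].
Definition bigcheck : bool := all (fun x1 => all (fun x2 => all (fun x3 => all (fun x4 =>
   let r := (x1,x2,x3,x4) in (2 %| nf r)%Z ||
   ((count (goodR r) unitsL == 1%N) && (count (goodL r) unitsL == 1%N))) D4) D4) D4) D4.
Lemma unitsL_size : size unitsL = 24%N. Proof. by vm_compute. Qed.
Lemma bigcheck_ok : bigcheck. Proof. vm_compute. reflexivity. Qed.
Ltac fld := field; rewrite ?pnatr_eq0 ?oner_eq0 //.
Section Bridge.
Variable R : rcfType.
Definition tt2 : R := Num.sqrt 2 / 2.
Definition emb (a : T4) : quat R := let: (a1,a2,a3,a4) := a in
  qadd (qadd (qzscale a1 (v1 R)) (qzscale a2 (v2 R))) (qadd (qzscale a3 (v3 R)) (qzscale a4 (v4 R))).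

Arguments emb : simpl never.
Lemma tt2_sq : tt2 * tt2 = 1/2.
Proof.
rewrite /tt2 mulrACA -expr2 sqr_sqrtr ?ler0n //. fld.
Qed.

Lemma tt2_neq0 : tt2 != 0.
Proof. by rewrite /tt2 mulf_neq0 // ?invr_eq0 ?pnatr_eq0 // gt_eqF // sqrtr_gt0 ltr0n. Qed.

Lemma emb_eq a1 a2 a3 a4 : emb (a1,a2,a3,a4) =
  Quat (a1%:~R + (a3%:~R + a4%:~R)/2) (a2%:~R + (a3%:~R + a4%:~R)/2) (a3%:~R * tt2) (a4%:~R * tt2).
Proof. rewrite /emb /qadd /qzscale /tt2 /=; congr Quat; fld. Qed.

Lemma mulform (A B C D A' B' C' D' t : R) : t * t = 1/2 ->
  qmul (Quat A B (C*t) (D*t)) (Quat A' B' (C'*t) (D'*t)) =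
  Quat (A*A' - B*B' - C*C'/2 - D*D'/2) (A*B' + B*A' + C*D'/2 - D*C'/2)
       ((A*C' - B*D' + C*A' + D*B')*t) ((A*D' + B*C' - C*B' + D*A')*t).
Proof.
move=> ht; rewrite /qmul /=; congr Quat.
- transitivity (A*A' - B*B' - C*C'*(t*t) - D*D'*(t*t)); first ring.
  rewrite ht; fld.
- transitivity (A*B' + B*A' + C*D'*(t*t) - D*C'*(t*t)); first ring.
  rewrite ht; fld.
- ring.
- ring.
Qed.

Lemma qmul_emb a b : qmul (emb a) (emb b) = emb (imul a b).
Proof.
case: a => [[[a1 a2] a3] a4]; case: b => [[[b1 b2] b3] b4].
rewrite !emb_eq mulform ?tt2_sq // /imul /=.
rewrite !(intrD, intrB, intrM).
congr Quat; fld.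
Qed.

Lemma qN_emb a : qN (emb a) = qreal (nf a)%:~R.
Proof.
case: a => [[[a1 a2] a3] a4].
rewrite /qN emb_eq /qconj /= -!mulNr mulform ?tt2_sq // /qreal /nf.
rewrite !(intrD, intrB, intrM).
congr Quat; fld.
Qed.

Lemma emb_inj a b : emb a = emb b -> a = b.
Proof.
case: a => [[[a1 a2] a3] a4]; case: b => [[[b1 b2] b3] b4].
rewrite !emb_eq => [[h1 h2 h3 h4]].
have e3 : a3 = b3 by apply: (@intr_inj R); apply: (mulIf tt2_neq0).
have e4 : a4 = b4 by apply: (@intr_inj R); apply: (mulIf tt2_neq0).
subst; move/addIr: h1 => /intr_inj ->; by move/addIr: h2 => /intr_inj ->.
Qed.
End Bridge.
Lemma nf_bound a1 a2 a3 a4 : nf (a1,a2,a3,a4) = 1 ->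
  [/\ -2 <= a1 <= 2, -2 <= a2 <= 2, -1 <= a3 <= 1 & -1 <= a4 <= 1].
Proof.
rewrite /nf => h.
have H : (2*a1+a3+a4)*(2*a1+a3+a4) + (2*a2+a3+a4)*(2*a2+a3+a4) + 2*(a3*a3) + 2*(a4*a4) = 4 * (a1*a1 + a2*a2 + (a1+a2)*(a3+a4) + a3*a3 + a4*a4 + a3*a4).
  by ring.
rewrite h mulr1 in H.
have sq : forall x : int, 0 <= x * x by move=> x; rewrite -expr2 sqr_ge0.
have b2 : forall x : int, x * x <= 2 -> (-1 <= x) && (x <= 1).
  move=> x hx; apply/andP; split; apply/negP => /negP; rewrite -ltNge => hh; nia.
have b4 : forall x : int, x * x <= 4 -> (-2 <= x) && (x <= 2).
  move=> x hx; apply/andP; split; apply/negP => /negP; rewrite -ltNge => hh; nia.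
have s1 := sq (2*a1+a3+a4); have s2 := sq (2*a2+a3+a4); have s3 := sq a3; have s4 := sq a4.
have /andP[? ?] := b2 a3 ltac:(lia).
have /andP[? ?] := b2 a4 ltac:(lia).
have /andP[? ?] := b4 (2*a1+a3+a4) ltac:(lia).
have /andP[? ?] := b4 (2*a2+a3+a4) ltac:(lia).
split; apply/andP; split; lia.
Qed.

Lemma memD5 x : -2 <= x <= 2 -> x \in D5.
Proof. move=> h; have : x = -2 \/ x = -1 \/ x = 0 \/ x = 1 \/ x = 2 by lia.
by case=> [->|[->|[->|[->|->]]]]. Qed.
Lemma memD3 x : -1 <= x <= 1 -> x \in D3.
Proof. move=> h; have : x = -1 \/ x = 0 \/ x = 1 by lia.
by case=> [->|[->|->]]. Qed.
Lemma memD4 x : 0 <= x -> x < 4 -> x \in D4.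
Proof. move=> h h'; have : x = 0 \/ x = 1 \/ x = 2 \/ x = 3 by lia.
by case=> [->|[->|[->|->]]]. Qed.

Lemma mem_box a1 a2 a3 a4 : a1 \in D5 -> a2 \in D5 -> a3 \in D3 -> a4 \in D3 ->
  (a1,a2,a3,a4) \in box.
Proof.
move=> h1 h2 h3 h4; apply/flatten_mapP; exists a1 => //.
apply/flatten_mapP; exists a2 => //; apply/flatten_mapP; exists a3 => //.
by apply: (map_f (fun x4 => (a1,a2,a3,x4))).
Qed.

Lemma dvdz_shift d a e : (d %| e)%Z -> (d %| a + e)%Z = (d %| a)%Z.
Proof.
move=> /dvdzP [r ->]; apply/dvdzP/dvdzP => [[q hq]|[q ->]].
- by exists (q - r); rewrite mulrBl -hq; ring.
- by exists (q + r); rewrite mulrDl.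
Qed.

Lemma odd_dvd n : odd `|n|%N = ~~ (2 %| n)%Z.
Proof. by rewrite dvdzE dvdn2 negbK. Qed.

Definition tadd (a b : T4) : T4 :=
  let: (a1,a2,a3,a4) := a in let: (b1,b2,b3,b4) := b in (a1+b1,a2+b2,a3+b3,a4+b4).
Definition t4 (a : T4) : T4 := let: (a1,a2,a3,a4) := a in (4*a1,4*a2,4*a3,4*a4).

Lemma checkL_shift x y z : x = tadd y (t4 z) -> checkL x = checkL y.
Proof.
case: y => [[[y1 y2] y3] y4]; case: z => [[[z1 z2] z3] z4] /= -> /=.
have s2 : forall y z : int, (2 %| y + 4 * z)%Z = (2 %| y)%Z.
  by move=> y z; rewrite dvdz_shift // dvdz_mulr.
have s4 : forall y z : int, (4 %| y + 4 * z)%Z = (4 %| y)%Z.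
  by move=> y z; rewrite dvdz_shift // dvdz_mulr.
have -> : y3 + 4 * z3 - (y4 + 4 * z4) = (y3 - y4) + 4 * (z3 - z4) by ring.
have -> : y1 + 4 * z1 + (y2 + 4 * z2) + (y3 + 4 * z3) = (y1 + y2 + y3) + 4 * (z1 + z2 + z3) by ring.
by rewrite !s2 !s4.
Qed.

Lemma shiftR r g a e : checkL (tsub (imul (tadd r (t4 g)) a) e) = checkL (tsub (imul r a) e).
Proof.
apply: checkL_shift (imul g a) _.
case: r => [[[r1 r2] r3] r4]; case: g => [[[g1 g2] g3] g4];
case: a => [[[b1 b2] b3] b4]; case: e => [[[e1 e2] e3] e4] /=.
congr (_,_,_,_); ring.
Qed.

Lemma shiftL r g a e : checkL (tsub (imul a (tadd r (t4 g))) e) = checkL (tsub (imul a r) e).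
Proof.
apply: checkL_shift (imul a g) _.
case: r => [[[r1 r2] r3] r4]; case: g => [[[g1 g2] g3] g4];
case: a => [[[b1 b2] b3] b4]; case: e => [[[e1 e2] e3] e4] /=.
congr (_,_,_,_); ring.
Qed.

Lemma nf_shift r g : (2 %| nf (tadd r (t4 g)))%Z = (2 %| nf r)%Z.
Proof.
have -> : nf (tadd r (t4 g)) = nf r + 2 * (2 * (nf (tadd r g) - nf r - nf g) + 8 * nf g).
  case: r => [[[r1 r2] r3] r4]; case: g => [[[g1 g2] g3] g4] /=; ring.
by rewrite dvdz_shift // dvdz_mulr.
Qed.

Lemma checkL_iff x : checkL x <-> exists h, x = imul gg h.
Proof.
split.
- case: x => [[[x1 x2] x3] x4] /=.
  case/and5P => /dvdzP[q1 e1'] /dvdzP[q2 e2'] /dvdzP[q3 e3'] /dvdzP[q4 e4']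
                /andP[/dvdzP[k ek] /dvdzP[m em]].
  exists (m, q2 - m + k, q4 + k, -k) => /=.
  congr (_,_,_,_); lia.
- case=> [[[[h1 h2] h3] h4] ->] /=.
  repeat (apply/andP; split); apply/dvdzP.
  + by exists (h1 - h2 - h3); ring.
  + by exists (h1 + h2 + h4); ring.
  + by exists (h3 - h4); ring.
  + by exists (h3 + h4); ring.
  + by exists (- h4); ring.
  + by exists h1; ring.
Qed.

Lemma count1P (T : eqType) (p : pred T) s : count p s = 1%N ->
  exists x, [/\ x \in s, p x & forall y, y \in s -> p y -> y = x].
Proof.
rewrite -size_filter.
case E: (filter p s) => [|x [|z l]] //= _.
have : x \in filter p s by rewrite E mem_head.
rewrite mem_filter => /andP[px xs]; exists x; split => // y ys py.
have : y \in filter p s by rewrite mem_filter py.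
by rewrite E inE => /eqP.
Qed.

Section Main.
Variable R : rcfType.

Lemma inH_emb q : inH q <-> exists a, q = emb R a.
Proof.
split; first by case=> a1 [a2 [a3 [a4 e]]]; exists (a1,a2,a3,a4).
by case=> [[[[a1 a2] a3] a4] ->]; exists a1, a2, a3, a4.
Qed.

Lemma gen2_emb : gen2 R = emb R gg.
Proof. rewrite emb_eq /gen2 /qmul /qreal /qadd /q1e /qi /qreal /=; congr Quat; fld. Qed.

Lemma q1e_emb : q1e R = emb R e1.
Proof. rewrite emb_eq /q1e /qreal /=; congr Quat; fld. Qed.

Lemma c2_emb : qadd (q1e R) (qmul (qreal 2) (v3 R)) = emb R c2.
Proof. rewrite emb_eq /q1e /qreal /qadd /qmul /v3 /tt2 /=; congr Quat; fld. Qed.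

Lemma qsub_emb a b : qsub (emb R a) (emb R b) = emb R (tsub a b).
Proof.
case: a => [[[a1 a2] a3] a4]; case: b => [[[b1 b2] b3] b4].
rewrite /tsub /qsub /qadd /qopp !emb_eq /= !intrB; congr Quat; fld.
Qed.

Lemma inI_emb y : inI (emb R y) <-> checkL y.
Proof.
rewrite checkL_iff; split.
- case=> h [/inH_emb [hh ->]]; rewrite gen2_emb qmul_emb => /emb_inj ->.
  by exists hh.
- case=> hh ->; exists (emb R hh); split; first by apply/inH_emb; exists hh.
  by rewrite gen2_emb qmul_emb.
Qed.

Lemma primary_emb x : primary (emb R x) <-> (checkL (tsub x e1) || checkL (tsub x c2)).
Proof.
rewrite /primary c2_emb q1e_emb !qsub_emb !inI_emb; split.
- by case=> _ [->|->] //; rewrite orbT.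
- move=> h; split; first by apply/inH_emb; exists x.
  by case/orP: h; [left|right].
Qed.

Lemma unit_emb u : unitH u <-> exists a, u = emb R a /\ a \in unitsL.
Proof.
split.
- case=> /inH_emb [a ->]; rewrite qN_emb /q1e /qreal => [[h]].
  have h1 : nf a = 1 by apply: (@intr_inj R); rewrite h.
  exists a; split => //.
  rewrite mem_filter h1 eqxx /=.
  case: a h1 {h} => [[[a1 a2] a3] a4] h1.
  have [? ? ? ?] := nf_bound h1.
  by apply: mem_box; [apply: memD5|apply: memD5|apply: memD3|apply: memD3].
- case=> a [-> ha]; split; first by apply/inH_emb; exists a.
  move: ha; rewrite mem_filter => /andP[/eqP h _].
  by rewrite qN_emb h /q1e.
Qed.

End Main.

Theorem lemma15 (R : rcfType) (b : quat R) :
  inH b -> odd_norm b ->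
  (exists! u : quat R, unitH u /\ primary (qmul b u)) /\
  (exists! u' : quat R, unitH u' /\ primary (qmul u' b)).
Proof.
move=> /inH_emb [[[[a1 a2] a3] a4] ->] [n [hn hN]].
move: hN; rewrite qN_emb /qreal => [[/intr_inj hN]].
have dec : forall a : int, a = (a %% 4)%Z + 4 * (a %/ 4)%Z.
  by move=> a; rewrite addrC mulrC -divz_eq.
have hr : forall a : int, (a %% 4)%Z \in D4.
  by move=> a; apply: memD4; [apply: modz_ge0 | apply: ltz_pmod].
pose r : T4 := ((a1 %% 4)%Z, (a2 %% 4)%Z, (a3 %% 4)%Z, (a4 %% 4)%Z).
pose g : T4 := ((a1 %/ 4)%Z, (a2 %/ 4)%Z, (a3 %/ 4)%Z, (a4 %/ 4)%Z).
have eb : (a1,a2,a3,a4) = tadd r (t4 g) by rewrite /= -!dec.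
have hN' : nf (tadd r (t4 g)) = n by rewrite -eb; exact: hN.
rewrite eb.
have oddr : ~~ (2 %| nf r)%Z by rewrite -(nf_shift r g) hN' -odd_dvd.
have := bigcheck_ok.
move/allP/(_ _ (hr a1))/allP/(_ _ (hr a2))/allP/(_ _ (hr a3))/allP/(_ _ (hr a4)).
cbv zeta; rewrite -/r (negbTE oddr) orFb => /andP[/eqP cR /eqP cL].
split.
- have [u [uin gu uuniq]] := count1P cR.
  exists (emb R u); split.
  + split; first by apply/unit_emb; exists u.
    by rewrite qmul_emb primary_emb !shiftR.
  + move=> v [/unit_emb [a [-> ain]]]; rewrite qmul_emb primary_emb !shiftR => ga.
    by rewrite (uuniq a ain ga).
- have [u [uin gu uuniq]] := count1P cL.
  exists (emb R u); split.
  + split; first by apply/unit_emb; exists u.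
    by rewrite qmul_emb primary_emb !shiftL.
  + move=> v [/unit_emb [a [-> ain]]]; rewrite qmul_emb primary_emb !shiftL => ga.
    by rewrite (uuniq a ain ga).
Qed.
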